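(* Let $\mathfrak p$ be a standard parabolic subalgebra of $\mathfrak g$ and $j\in\{1,\dots,n\}$. Then $w_j\in W^{\mathfrak p}$ if and only if $\alpha_j\notin\Sigma_{\mathfrak p}$. Moreover, for every $v\in W_+^{\mathfrak p}$ and every $w\in W^{\mathfrak p}$ we have $vw\in W^{\mathfrak p}$.
   Context: Let $\mathfrak g=\mathfrak{sl}_{n+1}(\mathbb C)$, $n\ge1$, $\Delta_+=\{\varepsilon_i-\varepsilon_j:i<j\}$, $\Delta_-=-\Delta_+$, $\Pi=\{\alpha_1,\dots,\alpha_n\}$, $\alpha_i=\varepsilon_i-\varepsilon_{i+1}$, $\theta=\alpha_1+\dots+\alpha_n$; $W$ the Weyl group generated by the simple reflections $s_i$. For $\Sigma\subset\Pi$, $\Delta_\Sigma$ is the root subsystem generated by $\Sigma$, $\mathfrak p_\Sigma$ the standard parabolic subalgebra, $\Sigma_{\mathfrak p_\Sigma}=\Sigma$, and $W^{\mathfrak p_\Sigma}=\{w\in W:\Delta_+\cap w(\Delta_-)\subset\Delta_+\setminus\Delta_\Sigma\}$. For $j=1,\dots,n$, $w_j\in W$ is the unique element preserving the set $\{\alpha_1,\dots,\alpha_n,-\theta\}$ with $w_j(-\theta)=\alpha_j$ (equivalently $w_j=(s_1s_2\cdots s_n)^j$); $W_+=\{e,w_1,\dots,w_n\}$ and $W_+^{\mathfrak p_\Sigma}=\{w\in W_+:w(\Sigma)=\Sigma\}$. *)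

(* Defs.v *)
(* Type A_n root system of sl_{n+1}(C), realised concretely:
   weights are integer vectors indexed by 'I_n.+1 (the eps_i), the Weyl group
   acts on them by permuting coordinates. Simple roots are indexed 0-based by
   'I_n (alpha k = eps_k - eps_(k+1)). *)
From HB Require Import structures.
From mathcomp Require Import all_boot all_order all_algebra all_fingroup.
Set Implicit Arguments. Unset Strict Implicit. Unset Printing Implicit Defensive.
Import GRing.Theory.
Local Open Scope ring_scope.

Section TypeA.
Variable n : nat.

Definition vec := {ffun 'I_n.+1 -> int}.

Definition eps (i : 'I_n.+1) : vec := [ffun k => ((k == i) : nat)%:Z].

Definition alpha (k : 'I_n) : vec := eps (widen_ord (leqnSn n) k) - eps (lift ord0 k).

Definition theta : vec := \sum_(k < n) alpha k.

Definition posroot (x : vec) : Prop :=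
  exists i j : 'I_n.+1, (i < j)%N /\ x = eps i - eps j.
Definition negroot (x : vec) : Prop := posroot (- x).
Definition isroot (x : vec) : Prop := posroot x \/ negroot x.

Definition in_span (S : {set 'I_n}) (x : vec) : Prop :=
  exists c : 'I_n -> int, (forall k, k \notin S -> c k = 0) /\
    x = \sum_(k < n) alpha k *~ c k.
Definition rootsub (S : {set 'I_n}) (x : vec) : Prop := isroot x /\ in_span S x.

(* action of a permutation on weights: w(eps_i) = eps_(w i) *)
Definition act (w : {perm 'I_n.+1}) (x : vec) : vec := [ffun k => x ((w^-1)%g k)].

(* composition in the usual (function) sense: (wmul v w) x = v (w x) *)
Definition wmul (v w : {perm 'I_n.+1}) : {perm 'I_n.+1} := (w * v)%g.

Definition sref (k : 'I_n) : {perm 'I_n.+1} := tperm (widen_ord (leqnSn n) k) (lift ord0 k).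

Definition Weyl : {set {perm 'I_n.+1}} := <<[set sref k | k in 'I_n]>>%g.

(* c = s_1 s_2 ... s_n (composition, s_n applied first) *)
Definition cox : {perm 'I_n.+1} := foldr wmul 1%g [seq sref k | k <- enum 'I_n].

(* w_j = (s_1 ... s_n)^j ; for k : 'I_n (0-based) this is w_(k+1) *)
Definition wj (k : 'I_n) : {perm 'I_n.+1} := (cox ^+ k.+1)%g.

Definition inWp (S : {set 'I_n}) (w : {perm 'I_n.+1}) : Prop :=
  w \in Weyl /\
  forall x, posroot x -> (exists y, negroot y /\ x = act w y) -> ~ rootsub S x.

Definition inWplus (w : {perm 'I_n.+1}) : Prop := w = 1%g \/ exists k, w = wj k.

(* W_+^{p_Sigma} = {w in W_+ : w(Sigma) = Sigma}, Sigma as a set of simple roots *)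
Definition inWplusp (S : {set 'I_n}) (w : {perm 'I_n.+1}) : Prop :=
  inWplus w /\
  (forall k, k \in S -> exists k', k' \in S /\ act w (alpha k) = alpha k') /\
  (forall k', k' \in S -> exists k, k \in S /\ act w (alpha k) = alpha k').

End TypeA.

(* Main.v *)
Require Import Defs.
From mathcomp Require Import all_boot all_order all_algebra all_fingroup.
From mathcomp Require Import zify.
Set Implicit Arguments. Unset Strict Implicit. Unset Printing Implicit Defensive.
Import GRing.Theory.
Local Open Scope ring_scope.

Section H.
Variable n : nat.
Local Notation wd := (widen_ord (leqnSn n)).
Local Notation lf := (lift ord0).


Lemma act_eps (w : {perm 'I_n.+1}) i : Defs.act w (eps i) = eps (w i).
Proof.
by apply/ffunP => k; rewrite !ffunE (canF_eq (permKV w)).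
Qed.

Lemma act_sub (w : {perm 'I_n.+1}) x y : Defs.act w (x - y) = Defs.act w x - Defs.act w y.
Proof. by apply/ffunP => k; rewrite !ffunE. Qed.

Lemma bdiff1 (b c : bool) : (b : nat)%:Z - (c : nat)%:Z = 1 -> b.
Proof. by case: b; case: c. Qed.
Lemma bdiffm1 (b c : bool) : (b : nat)%:Z - (c : nat)%:Z = -1 -> c.
Proof. by case: b; case: c. Qed.

Lemma eps_inj2 (p q r s : 'I_n.+1) : p != q -> eps p - eps q = eps r - eps s ->
  p = r /\ q = s.
Proof.
move=> pq E.
have Ep := congr1 (fun f : vec n => f p) E.
have Eq := congr1 (fun f : vec n => f q) E.
move: Ep Eq; rewrite !ffunE !eqxx; have pqf : (p == q) = false by apply/negbTE. have qpf : (q == p) = false by rewrite eq_sym. rewrite pqf qpf /= => Ep Eq.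
split.
  by apply/eqP; apply: (bdiff1 (c := p == s)); rewrite -Ep.
by apply/eqP; apply: (bdiffm1 (b := q == r)); rewrite -Eq.
Qed.

Lemma wd_lf (k : 'I_n) : wd k != lf k.
Proof. by apply/eqP => /(congr1 val); rewrite /= /bump /=; lia. Qed.


Definition fk (k : nat) (x : vec n) : int :=
  \sum_(i < n.+1) x i * ((i <= k)%N : nat)%:Z.

Lemma fk_eps k j : fk k (eps j) = ((j <= k)%N : nat)%:Z.
Proof.
rewrite /fk (bigD1 j) //= ffunE eqxx mul1r big1 ?addr0 // => i /negbTE ij.
by rewrite ffunE ij mul0r.
Qed.

Lemma fk_sub k x y : fk k (x - y) = fk k x - fk k y.
Proof. by rewrite /fk -sumrB; apply: eq_bigr => i _; rewrite !ffunE mulrBl. Qed.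

Lemma fk_alpha k (m : 'I_n) : fk k (alpha m) = ((val m == k) : nat)%:Z.
Proof.
rewrite /alpha fk_sub !fk_eps /= /bump /=.
by case: (ltngtP m k) => h.
Qed.

Lemma fk_sum k (c : 'I_n -> int) :
  fk k (\sum_(m < n) alpha m *~ c m) = \sum_(m < n) fk k (alpha m) * c m.
Proof.
rewrite /fk.
under eq_bigr => i _ do rewrite sum_ffunE mulr_suml.
rewrite exchange_big; apply: eq_bigr => m _.
rewrite mulr_suml; apply: eq_bigr => i _.
by rewrite ffunMzE mulrzz mulrAC.
Qed.

Lemma span_in (S : {set 'I_n}) (a b : 'I_n.+1) :
  in_span S (eps a - eps b) -> forall k : 'I_n, (a <= k < b)%N -> k \in S.
Proof.
case=> c [c0 E] k hk; apply/negPn/negP => kS.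
have := congr1 (fk k) E.
rewrite fk_sum fk_sub !fk_eps (bigD1 k) //= fk_alpha eqxx c0 //.
rewrite big1 => [|m mk]; last first.
  rewrite fk_alpha (_ : (val m == val k) = false) ?mul0r //; exact/negbTE.
have h1 : (a <= k)%N by lia.
have h2 : (b <= k)%N = false by lia.
by rewrite h1 h2.
Qed.

Lemma chain (h : nat -> nat) a b : (a < b)%N ->
  (forall k, (a <= k < b)%N -> (h k < h k.+1)%N) -> (h a < h b)%N.
Proof.
elim: b => [//|b IH] ab H.
case: (ltngtP a b) => h1; last by rewrite -h1; apply: H; lia.
- apply: (ltn_trans (IH h1 _)); first by move=> k hk; apply: H; lia.
  by apply: H; lia.
- lia.
Qed.

Definition C (S : {set 'I_n}) (w : {perm 'I_n.+1}) :=
  forall x, posroot x -> (exists y, negroot y /\ x = Defs.act w y) -> ~ rootsub S x.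

Definition good (S : {set 'I_n}) (w : {perm 'I_n.+1}) :=
  forall (k : 'I_n) (p q : 'I_n.+1), k \in S -> w p = wd k -> w q = lf k -> (p < q)%N.

Lemma goodC S w : good S w -> C S w.
Proof.
move=> gd x [a [b [ab ->]]] [y [[c [d [cd ny]]] hy]] [_ hspan].
have ey : y = eps d - eps c by rewrite -[y]opprK ny opprB.
rewrite ey act_sub !act_eps in hy.
have [ea eb] := eps_inj2 (negbT (ltn_eqF ab)) hy.
pose h i := val ((w^-1)%g (inord i : 'I_n.+1)).
have : (h a < h b)%N.
  apply: chain => // k hk.
  have kn : (k < n)%N by have := ltn_ord b; lia.
  pose ko : 'I_n := Ordinal kn.
  apply: (gd ko).
  - by apply: (span_in hspan); rewrite /=; lia.
  - by rewrite permKV; apply: val_inj; rewrite /= inordK //; lia.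
  - by rewrite permKV; apply: val_inj; rewrite /= inordK //; lia.
by rewrite /h !inord_val ea eb !permK => /(ltn_trans cd); rewrite ltnn.
Qed.

Lemma notC (S : {set 'I_n}) (w : {perm 'I_n.+1}) (k : 'I_n) (p q : 'I_n.+1) : k \in S -> w p = wd k -> w q = lf k ->
  (q < p)%N -> ~ C S w.
Proof.
move=> kS hp hq qp Cw.
have pr : posroot (alpha k).
  by exists (wd k), (lf k); split => //=; rewrite /bump /=; lia.
apply: (Cw (alpha k) pr).
  exists (eps p - eps q); split.
    by exists q, p; split => //; rewrite opprB.
  by rewrite act_sub !act_eps hp hq.
split; first by left.
exists (fun m => ((m == k) : nat)%:Z); split.
  by move=> m mS; have -> : (m == k) = false by apply/eqP => mk; rewrite mk kS in mS.
rewrite (bigD1 k) //= eqxx big1 ?addr0 // => m /negbTE ->.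
by rewrite mulr0z.
Qed.


Lemma cox_aux (l : seq 'I_n) m : (m <= n)%N -> map val l = iota m (n - m)%N ->
  forall i : 'I_n.+1, val (foldr (@wmul n) 1%g [seq sref k | k <- l] i) =
    if (m <= i < n)%N then i.+1 else if val i == n then m else i.
Proof.
elim: l m => [|k l IH] m hm /= hl i.
  have : (n - m = 0)%N by rewrite -(size_iota m (n - m)) -hl.
  move=> e; rewrite perm1.
  have hi := ltn_ord i; repeat case: ifP => ?; lia.
have hnm : (m < n)%N.
  by move: hl; case E: (n - m)%N => [|t] //= _; lia.
rewrite (_ : (n - m = (n - m.+1).+1)%N) in hl; last by lia.
case: hl => hk hl.
have e := IH m.+1 hnm hl i.
set F := foldr (@wmul n) 1%g [seq sref k | k <- l] in e *.
rewrite /wmul permM /sref.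
have hi := ltn_ord i.
case: tpermP => [e'|e'|h1 h2].
- rewrite e' /= /bump /= hk in e *; move: e; repeat case: ifP => ?; lia.
- rewrite e' /= /bump /= hk in e *; move: e; repeat case: ifP => ?; lia.
- have h1' : val (F i) != m.
    by apply/eqP => e1; apply: h1; apply: val_inj; rewrite e1 /= hk.
  have h2' : val (F i) != m.+1.
    by apply/eqP => e1; apply: h2; apply: val_inj; rewrite e1 /= /bump /= hk; lia.
  have ey : val (F i) = nat_of_ord (F i) by [].
  move: e h1' h2'; repeat case: ifP => ?; lia.
Qed.

Lemma coxE (i : 'I_n.+1) : val (cox n i) = if (i < n)%N then i.+1 else 0.
Proof.
rewrite /cox (@cox_aux _ 0) //; last by rewrite val_enum_ord subn0.
have hi := ltn_ord i; have ey : val i = nat_of_ord i by []; repeat case: ifP => ?; lia.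
Qed.

Lemma coxX m (i : 'I_n.+1) : val ((cox n ^+ m)%g i) = ((i + m) %% n.+1)%N.
Proof.
elim: m => [|m IH]; first by rewrite expg0 perm1 addn0 modn_small.
rewrite expgSr permM coxE IH addnS -(addn1 (i + m)) -[in RHS]modnDml.
have hl := ltn_pmod (i + m) (ltn0Sn n).
case: ifP => h; first by rewrite addn1 (@modn_small ((i + m) %% n.+1).+1).
have -> : ((i + m) %% n.+1 = n)%N by lia.
by rewrite addn1 modnn.
Qed.

Lemma wjE (k : 'I_n) (i : 'I_n.+1) : val (wj k i) =
  if (i + k.+1 < n.+1)%N then (i + k.+1)%N else (i + k.+1 - n.+1)%N.
Proof.
rewrite /wj coxX; case: ltnP => h; first by rewrite modn_small.
have hi := ltn_ord i; have hk := ltn_ord k.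
rewrite -{1}(subnK h) modnDr modn_small //; lia.
Qed.

Lemma foldr_Weyl (l : seq 'I_n) : foldr (@wmul n) 1%g [seq sref k | k <- l] \in Weyl n.
Proof.
elim: l => [|k l IH] /=; first exact: group1.
rewrite /wmul groupM // mem_gen //; by apply/imsetP; exists k.
Qed.

Lemma wj_Weyl (k : 'I_n) : wj k \in Weyl n.
Proof. by rewrite /wj groupX // /cox foldr_Weyl. Qed.

End H.

Theorem mainTheorem9 (n : nat) (hn : (1 <= n)%N) (S : {set 'I_n}) :
  (forall j : 'I_n, inWp S (wj j) <-> j \notin S) /\
  (forall v w : {perm 'I_n.+1}, inWplusp S v -> inWp S w -> inWp S (wmul v w)).
Proof.
split.
  move=> j; split.
    case=> _ Cw; apply/negP => jS.
    apply: (@notC n S (wj j) j ord_max ord0 jS _ _ _ Cw) => //.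
    - apply: val_inj; rewrite wjE /=; have := ltn_ord j; case: ifP => ?; lia.
    - apply: val_inj; rewrite wjE /= /bump /=; have := ltn_ord j; case: ifP => ?; lia.
  move=> jS; split; first exact: wj_Weyl.
  apply: goodC => k p q kS hp hq.
  have kj : nat_of_ord k != nat_of_ord j.
    apply/eqP => e; have ekj : k = j by apply: val_inj.
    by rewrite -ekj kS in jS.
  move/(congr1 val): hp; move/(congr1 val): hq.
  rewrite !wjE /= /bump /=.
  have := ltn_ord j; have := ltn_ord k; have := ltn_ord p; have := ltn_ord q.
  move: kj; repeat case: ifP => ?; lia.
move=> v w [hv [_ hS]] [wW Cw]; split.
  rewrite /wmul groupM //; case: hv => [->|[k ->]]; [exact: group1 | exact: wj_Weyl].
apply: goodC.
have gw : good S w.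
  move=> k p q kS hp hq; case: (ltngtP p q) => // h.
    by exfalso; exact: (notC kS hp hq h Cw).
  have epq : p = q by apply: val_inj.
  by move: (wd_lf k); rewrite -hp -hq epq eqxx.
move=> k p q kS hp hq; rewrite /wmul !permM in hp hq.
have [k0 [k0S e]] := hS k kS.
rewrite /alpha act_sub !act_eps in e.
have pq0 : v (widen_ord (leqnSn n) k0) != v (lift ord0 k0).
  by rewrite (inj_eq perm_inj) wd_lf.
have [e1 e2] := eps_inj2 pq0 e.
apply: (gw k0) => //; apply: (@perm_inj _ v).
  by rewrite hp e1.
by rewrite hq e2.
Qed.
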